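(* Let $R$ be an associative ring with identity and let $e_1, e_2$ be idempotents of $R$ with $e_1 \sim_i e_2$. Then there is an automorphism of $R$ sending $e_1$ to $e_2$.
   Context: Let $\gamma(R)$ be the directed graph whose vertices are the idempotents of $R$, with an edge $f \to g$ if and only if $fg = 0$; $f$ is then called an in-neighbour of $g$. For idempotents $e, e'$, write $e \sim_i e'$ if they have the same set of in-neighbours in $\gamma(R)$, i.e. for every idempotent $f \in R$, $fe = 0 \iff fe' = 0$. *)

(* Defs.v *)
From HB Require Import structures.
From mathcomp Require Import all_boot all_order all_algebra.
Set Implicit Arguments. Unset Strict Implicit. Unset Printing Implicit Defensive.
Import GRing.Theory.
Local Open Scope ring_scope.

Definition idem (R : pzRingType) (e : R) : Prop := e * e = e.

(* e ~_i e' : e and e' have the same in-neighbours in the directed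
   idempotent graph gamma(R), where f -> g iff f * g = 0. *)
Definition same_in_nbrs (R : pzRingType) (e e' : R) : Prop :=
  forall f : R, idem f -> (f * e = 0 <-> f * e' = 0).

(* Main.v *)
Require Import Defs.
From HB Require Import structures.
From mathcomp Require Import all_boot all_order all_algebra.
Import GRing.Theory.
Local Open Scope ring_scope.

Definition cjm (R : pzRingType) (u v : R) (h : (u * v = 1) * (v * u = 1)) (x : R) : R :=
  v * x * u.

Lemma cjm_nmod (R : pzRingType) (u v : R) h : nmod_morphism (@cjm R u v h).
Proof. split; rewrite /cjm; first by rewrite mulr0 mul0r.
by move=> x y; rewrite mulrDr mulrDl. Qed.

Lemma cjm_mon (R : pzRingType) (u v : R) h : monoid_morphism (@cjm R u v h).
Proof.
case: h => h1 h2; split; rewrite /cjm ?mulr1 //.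
by move=> x y; rewrite -!mulrA (mulrA u) h1 mul1r.
Qed.

HB.instance Definition _ (R : pzRingType) (u v : R) h :=
  GRing.isNmodMorphism.Build R R (@cjm R u v h) (@cjm_nmod R u v h).
HB.instance Definition _ (R : pzRingType) (u v : R) h :=
  GRing.isMonoidMorphism.Build R R (@cjm R u v h) (@cjm_mon R u v h).

Theorem mainTheorem8 (R : pzRingType) (e1 e2 : R) :
  idem e1 -> idem e2 -> same_in_nbrs e1 e2 ->
  exists phi : {rmorphism R -> R}, bijective phi /\ phi e1 = e2.
Proof.
rewrite /idem /same_in_nbrs => i1 i2 H.
have h12 : e1 * e2 = e2.
  have f1 : idem (1 - e1) by rewrite /idem mulrBr mulr1 mulrBl mul1r i1 subrr subr0.
  have := (H _ f1).1; rewrite mulrBl mul1r i1 subrr => /(_ erefl).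
  by rewrite mulrBl mul1r => /eqP; rewrite subr_eq0 => /eqP/esym.
have h21 : e2 * e1 = e1.
  have f2 : idem (1 - e2) by rewrite /idem mulrBr mulr1 mulrBl mul1r i2 subrr subr0.
  have := (H _ f2).2; rewrite mulrBl mul1r i2 subrr => /(_ erefl).
  by rewrite mulrBl mul1r => /eqP; rewrite subr_eq0 => /eqP/esym.
set a := e2 - e1.
have a2 : a * a = 0.
  by rewrite /a mulrBr !mulrBl i1 i2 h12 h21 subrr subrr subr0.
have h : ((1 + a) * (1 - a) = 1) * ((1 - a) * (1 + a) = 1).
  split.
    by rewrite mulrDl mul1r mulrBr mulr1 a2 subr0 subrK.
  by rewrite mulrBl mul1r mulrDr mulr1 a2 addr0 addrK.
exists (@cjm R _ _ h); split.
  exists (@cjm R _ _ (h.2, h.1)) => x; rewrite /cjm /=.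
    by rewrite !mulrA h.1 mul1r -mulrA h.1 mulr1.
  by rewrite /cjm !mulrA h.2 mul1r -mulrA h.2 mulr1.
have ae1 : a * e1 = 0 by rewrite /a mulrBl h21 i1 subrr.
have e1a : e1 * a = a by rewrite /a mulrBr h12 i1.
rewrite /= /cjm mulrBl mul1r ae1 subr0 mulrDr mulr1 e1a /a.
by rewrite addrC subrK.
Qed.
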